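(* Let $f,g\in G_B^I$. Then $f\boxtimes g\in G_B^I$ and $f\boxtimes_1 g\in G_B^I$.
   Context: $B$ is a unital algebra over a field $\mathbb K$ of characteristic zero. $\mathrm{Mult}[[B]]$: sequences $f=(f_n)_{n\ge0}$ of multilinear maps $f_n:B^n\to B$; product $(f\cdot g)_n(x_1,\dots,x_n)=\sum_{k=0}^n f_k(x_1,\dots,x_k)g_{n-k}(x_{k+1},\dots,x_n)$; $I=(\delta_{n,1}\mathrm{id}_B)$. $G_B^{\mathrm{inv}}=\{f:f_0\in B^\times\}$, $G_B^{\mathrm{dif}}=\{f:f_0=0,f_1\in GL(B)\}$, $G_B^I=\{I\cdot F:F\in G_B^{\mathrm{inv}}\}$, where $(I\cdot F)_n(x_1,\dots,x_n)=x_1F_{n-1}(x_2,\dots,x_n)$; equivalently $G_B^I=\{f\in G_B^{\mathrm{dif}}: f_1(1)\in B^\times,\ f_n(x_1,\dots,x_n)=x_1f_n(1,x_2,\dots,x_n)\ \forall n\ge1\}$. Planar binary trees: $Y_0=\{|\}$, $Y_n=\{\sigma\vee\tau:\sigma\in Y_k,\tau\in Y_l,k+l=n-1\}$; each $\tau\in Y_n$, $n\ge1$, is uniquely $\tau_1\vee(\tau_2\vee(\cdots\vee(\tau_k\vee|)))$; $j_i=|\tau_1|+\dots+|\tau_i|+i$. $(f\cup g)_|=1$, $(f\cup g)_\tau(x_1,\dots,x_n)=g_k((g\cup f)_{\tau_1}(x_1,\dots,x_{j_1-1})x_{j_1},\dots,(g\cup f)_{\tau_k}(x_{j_{k-1}+1},\dots,x_{j_k-1})x_{j_k})$.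 $R(|)=|$, $R(\sigma\vee\tau)=(|\vee R(\sigma))\vee R(\tau)$. $(f\boxtimes g)_0=g_0$, $(f\boxtimes g)_n(x_1,\dots,x_n)=\sum_{\tau\in Y_n}(f\cup g)_{R(\tau)}(x_1,1,\dots,x_n,1)$; $(f\boxtimes_1 g)_0=0$, $(f\boxtimes_1 g)_n(x_1,\dots,x_n)=\sum_{\tau\in Y_{n-1}}(g\cup f)_{|\vee R(\tau)}(x_1,1,x_2,1,\dots,1,x_n)$ for $n\ge1$. *)

(* Defs.v *)
From HB Require Import structures.
From mathcomp Require Import all_boot all_order all_algebra.
Set Implicit Arguments. Unset Strict Implicit. Unset Printing Implicit Defensive.
Import GRing.Theory.
Local Open Scope ring_scope.

(* An element f of Mult[[B]] is represented as f : seq B -> B;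
   f_n is the restriction of f to lists of length n. *)

Section Defs.
Variables (K : fieldType) (B : algType K).

Definition multilinear (f : seq B -> B) : Prop :=
  forall (l r : seq B) (a : K) (x y : B),
    f (l ++ (a *: x + y) :: r) = a *: f (l ++ x :: r) + f (l ++ y :: r).

Definition is_unitB (x : B) : Prop := exists y : B, x * y = 1 /\ y * x = 1.

Definition mprod (f g : seq B -> B) (xs : seq B) : B :=
  \sum_(k < (size xs).+1) f (take k xs) * g (drop k xs).

Definition Iseq (xs : seq B) : B := if xs is [:: x] then x else 0.

(* G_B^I = { I . F : F in G_B^inv } *)
Definition in_GI (f : seq B -> B) : Prop :=
  exists F : seq B -> B,
    [/\ multilinear F, is_unitB (F [::]) & forall xs, f xs = mprod Iseq F xs].

End Defs.

Inductive tree : Type := Leaf | Node of tree & tree.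

Fixpoint tsize (t : tree) : nat :=
  match t with Leaf => 0 | Node l r => (tsize l + tsize r).+1 end.

(* treesF fuel n enumerates Y_n (fuel >= n suffices) *)
Fixpoint treesF (fuel n : nat) : seq tree :=
  match fuel with
  | 0 => if n is 0 then [:: Leaf] else [::]
  | fuel'.+1 =>
    match n with
    | 0 => [:: Leaf]
    | n'.+1 => flatten [seq [seq Node s t | s <- treesF fuel' k, t <- treesF fuel' (n' - k)]
                       | k <- iota 0 n'.+1]
    end
  end.

Definition Y (n : nat) : seq tree := treesF n n.

Fixpoint Rtree (t : tree) : tree :=
  match t with Leaf => Leaf | Node s u => Node (Node Leaf (Rtree s)) (Rtree u) end.

Section Cup.
Variables (K : fieldType) (B : algType K).

(* For tau = tau_1 v (tau_2 v ( ... v (tau_k v |))),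
   cup f g tau xs = g [:: (g cup f)_{tau_1}(block_1) x_{j_1}; ...;
                          (g cup f)_{tau_k}(block_k) x_{j_k}],
   computed by the auxiliary [cup_args f g] along the right spine. *)
Fixpoint cup (f g : seq B -> B) (t : tree) (xs : seq B) {struct t} : B :=
  match t with
  | Leaf => 1
  | Node l r =>
      g ((cup g f l (take (tsize l) xs) * nth 0 xs (tsize l))
           :: cup_args f g r (drop (tsize l).+1 xs))
  end
with cup_args (f g : seq B -> B) (u : tree) (ys : seq B) {struct u} : seq B :=
  match u with
  | Leaf => [::]
  | Node l r =>
      (cup g f l (take (tsize l) ys) * nth 0 ys (tsize l))
        :: cup_args f g r (drop (tsize l).+1 ys)
  end.

Definition boxtimes (f g : seq B -> B) (xs : seq B) : B :=
  if xs is [::] then g [::]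
  else \sum_(t <- Y (size xs)) cup f g (Rtree t) (flatten [seq [:: x; 1] | x <- xs]).

Definition boxtimes1 (f g : seq B -> B) (xs : seq B) : B :=
  if xs is x1 :: xs' then
    \sum_(t <- Y (size xs')) cup g f (Node Leaf (Rtree t))
                               (x1 :: flatten [seq [:: 1; x] | x <- xs'])
  else 0.

End Cup.

(* Main.v *)
Require Import Defs.
From HB Require Import structures.
From mathcomp Require Import all_boot all_order all_algebra zify.
Set Implicit Arguments. Unset Strict Implicit. Unset Printing Implicit Defensive.
Import GRing.Theory.
Local Open Scope ring_scope.

Fixpoint tree_eqb t u := match t, u with
  | Leaf, Leaf => true
  | Node a b, Node c d => tree_eqb a c && tree_eqb b d
  | _, _ => false end.
Lemma tree_eqP : Equality.axiom tree_eqb.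
Proof.
elim=> [|a IHa b IHb] [|c d] /=; try by constructor.
case: (IHa c) => [->|h]; last by constructor; case.
case: (IHb d) => [->|h]; last by constructor; case.
by constructor.
Qed.
HB.instance Definition _ := hasDecEq.Build tree tree_eqP.

Lemma treesF_size fuel n t : t \in treesF fuel n -> Defs.tsize t = n.
Proof.
elim: fuel n t => [|fu IH] [|n] t; try by rewrite /= inE => /eqP->.
  by rewrite /= in_nil.
change (t \in flatten [seq [seq Node s u | s <- treesF fu k, u <- treesF fu (n - k)] | k <- iota 0 n.+1] -> Defs.tsize t = n.+1).
move=> ht; have [s hs1 hs2] := flattenP ht; move: hs1 hs2 => /mapP [k hk ->] /allpairsP [[u v] [/= hu hv ->]] /=.
rewrite (IH _ _ hu) (IH _ _ hv); move: hk; rewrite mem_iota; lia.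
Qed.

Lemma Rtree_size t : Defs.tsize (Rtree t) = (2 * Defs.tsize t)%N.
Proof. elim: t => //= a IHa b IHb; rewrite IHa IHb; lia. Qed.

Lemma Y1 : Y 1 = [:: Node Leaf Leaf].
Proof. by []. Qed.

Section S.
Variables (K : fieldType) (B : algType K).
Implicit Types (f g h F : seq B -> B).

Lemma mprodI F : mprod (@Iseq K B) F [::] = 0 /\ forall x xs, mprod (@Iseq K B) F (x::xs) = x * F xs.
Proof.
split; first by rewrite /mprod big_ord_recl big_ord0 /= mul0r addr0.
move=> x xs; rewrite /mprod /= big_ord_recl /= mul0r add0r big_ord_recl /=.
rewrite big1 ?addr0 => [|i _]; first by rewrite addn0 take0 drop0.
case: xs i => [|y ys] i /=; first by case: i.
by rewrite mul0r.
Qed.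

Lemma GI_dec h : in_GI h -> exists F, [/\ multilinear F, is_unitB (F [::]), h [::] = 0
   & forall x xs, h (x::xs) = x * F xs].
Proof.
case=> F [mF uF hF]; exists F; split=> //; first by rewrite hF (mprodI F).1.
by move=> x xs; rewrite hF (mprodI F).2.
Qed.

Lemma GI_mult h : in_GI h -> multilinear h.
Proof.
case/GI_dec=> F [mF _ h0 hc] [|x0 l] r a x y /=; rewrite !hc.
  by rewrite mulrDl scalerAl.
by rewrite mF mulrDr scalerAr.
Qed.

Lemma unitM (a b : B) : is_unitB a -> is_unitB b -> is_unitB (a * b).
Proof.
case=> a' [h1 h2] [b' [h3 h4]]; exists (b' * a'); split.
  by rewrite mulrA -(mulrA a) h3 mulr1.
by rewrite mulrA -(mulrA b') h2 mulr1.
Qed.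

Lemma GI_intro h : h [::] = 0 -> (forall x xs, h (x::xs) = x * h (1::xs)) ->
  multilinear (fun xs => h (1::xs)) -> is_unitB (h [:: 1]) -> in_GI h.
Proof.
move=> h0 hc ml u; exists (fun xs => h (1::xs)); split=> // -[|x xs].
  by rewrite (mprodI _).1.
by rewrite (mprodI _).2.
Qed.

Definition Lin (P : seq B -> seq B) N := forall l r a x y, (size l + size r + 1)%N = N ->
  exists p q u v, [/\ P (l ++ (a *: x + y) :: r) = p ++ (a *: u + v) :: q,
     P (l ++ x :: r) = p ++ u :: q & P (l ++ y :: r) = p ++ v :: q].
Definition slin (P : seq B -> B) N := forall l r a x y, (size l + size r + 1)%N = N ->
  P (l ++ (a *: x + y) :: r) = a *: P (l ++ x :: r) + P (l ++ y :: r).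

Lemma comp_slin g P N : multilinear g -> Lin P N -> slin (fun xs => g (P xs)) N.
Proof.
move=> mg hP l r a x y hs; have [p [q [u [v [-> -> ->]]]]] := hP l r a x y hs.
exact: mg.
Qed.

Lemma cup_slin f g t : multilinear g -> Lin (cup_args f g t) (Defs.tsize t) ->
  slin (cup f g t) (Defs.tsize t).
Proof.
case: t => [|lt rt] mg hL.
  move=> l r a x y /=; lia.
exact: (comp_slin mg hL).
Qed.


Lemma take_mid (l r : seq B) z k : take (size l + k.+1) (l ++ z :: r) = l ++ z :: take k r.
Proof. by elim: l => //= w l ->. Qed.
Lemma nth_mid (l r : seq B) z k : nth 0 (l ++ z :: r) (size l + k.+1) = nth 0 r k.
Proof. by elim: l. Qed.
Lemma drop_mid (l r : seq B) z k : drop (size l + k.+2) (l ++ z :: r) = drop k.+1 r.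
Proof. by elim: l. Qed.
Lemma drop_catl n (l s : seq B) : (n <= size l)%N -> drop n (l ++ s) = drop n l ++ s.
Proof.
rewrite leq_eqVlt drop_cat => /orP [/eqP ->|->] //.
by rewrite ltnn subnn drop0 drop_size.
Qed.

Lemma cupargs_Lin t : forall f g, multilinear f -> multilinear g ->
  Lin (cup_args f g t) (Defs.tsize t).
Proof.
elim: t => [|lt IHl rt IHr] f g mf mg l r a x y hs; first by move: hs => /=; lia.
have sl := cup_slin mf (IHl g f mg mf).
rewrite /= in hs *; move: sl hs; move: (Defs.tsize lt) => n sl hs.
case: (ltngtP (size l) n) => h.
- have [k ek] : exists k, n = (size l + k.+1)%N by exists (n - size l).-1; lia.
  subst n; rewrite !take_mid !nth_mid -(addnS (size l) k.+1) !drop_mid.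
  exists [::], (cup_args f g rt (drop k.+1 r)), (cup g f lt (l ++ x :: take k r) * nth 0 r k),
    (cup g f lt (l ++ y :: take k r) * nth 0 r k); split=> //=.
  rewrite sl ?mulrDl -?scalerAl //.
  rewrite size_takel; first by rewrite addn1 addnS.
  move: hs; set s1 := size l; set s2 := size r; lia.
- have [k ek] : exists k, size l = (n + k.+1)%N by exists (size l - n).-1; lia.
  have [p [q [u [v [e1 e2 e3]]]]] := IHr f g mf mg (drop n.+1 l) r a x y
    ltac:(rewrite size_drop; move: ek hs; set s1 := size l; set s2 := size r; lia).
  have hn : (n <= size l)%N by rewrite ek; lia.
  have hn1 : (n.+1 <= size l)%N by rewrite ek; lia.
  exists ((cup g f lt (take n l) * nth 0 l n) :: p), q, u, v.
  have hn2 : (n < size l)%N by rewrite ek; lia.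
  by rewrite !takel_cat // !nth_cat hn2 /= !drop_catl // e1 e2 e3.
- subst n; rewrite !take_size_cat // !nth_cat ltnn subnn /= !drop_cat ltnNge leqnSn /= subSnn /= drop0.
  exists [::], (cup_args f g rt r), (cup g f lt l * x), (cup g f lt l * y); split=> //=.
  by rewrite mulrDr scalerAr.
Qed.


Lemma flat_size1 (c : B) (s : seq B) : size (flatten [seq [:: w; c] | w <- s]) = (2 * size s)%N.
Proof. elim: s => //= w s IH; rewrite IH; lia. Qed.
Lemma flat_size2 (c : B) (s : seq B) : size (flatten [seq [:: c; w] | w <- s]) = (2 * size s)%N.
Proof. elim: s => //= w s IH; rewrite IH; lia. Qed.

Lemma sum_lin (s : seq tree) (W1 W2 W3 : tree -> B) a :
  (forall t, t \in s -> W1 t = a *: W2 t + W3 t) ->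
  \sum_(t <- s) W1 t = a *: \sum_(t <- s) W2 t + \sum_(t <- s) W3 t.
Proof. by move=> H; rewrite (eq_big_seq _ H) big_split /= scaler_sumr. Qed.

Lemma boxtimes_cons f g x xs : boxtimes f g (x :: xs) =
  \sum_(t <- Y (size xs).+1) cup f g (Rtree t) (x :: 1 :: flatten [seq [:: w; 1] | w <- xs]).
Proof. by []. Qed.
Lemma boxtimes1_cons f g x xs : boxtimes1 f g (x :: xs) =
  \sum_(t <- Y (size xs)) cup g f (Node Leaf (Rtree t)) (x :: flatten [seq [:: 1; w] | w <- xs]).
Proof. by []. Qed.

End S.

Lemma Y_node n t : t \in Y n.+1 -> exists s u, t = Node s u.
Proof. case: t => [|s u] h; last by exists s, u. by have := treesF_size h. Qed.

Theorem lemma3 (K : fieldType) (charK0 : [pchar K] =i pred0)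
    (B : algType K) (f g : seq B -> B) :
  in_GI f -> in_GI g -> in_GI (boxtimes f g) /\ in_GI (boxtimes1 f g).
Proof.
move=> Gf Gg; have mf := GI_mult Gf; have mg := GI_mult Gg.
case/GI_dec: Gf => Ff [_ uf f0 fc]; case/GI_dec: Gg => Fg [_ ug g0 gc].
split; apply: GI_intro.
- by rewrite /boxtimes g0.
- move=> x xs; rewrite !boxtimes_cons mulr_sumr; apply: eq_big_seq => t ht.
  have [s [u ->]] := Y_node ht.
  by rewrite /= !gc !fc !mul1r !mulrA.
- move=> l r a x y.
  have E : forall z, flatten [seq [:: w; 1] | w <- l ++ z :: r] =
     flatten [seq [:: w; 1] | w <- l] ++ z :: 1 :: flatten [seq [:: w; (1:B)] | w <- r].
    by move=> z; rewrite map_cat flatten_cat.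
  rewrite !boxtimes_cons !size_cat; apply: sum_lin => t ht; rewrite !E.
  have sl := cup_slin mg (cupargs_Lin (t:=Rtree t) mf mg).
  apply: (sl (1 :: 1 :: flatten [seq [:: w; 1] | w <- l])).
  rewrite Rtree_size (treesF_size ht) /= !flat_size1.
  set s1 := size l; set s2 := size r; lia.
- by rewrite /boxtimes /= Y1 big_cons big_nil /= addr0 !gc !fc !mul1r !mulr1; apply: unitM.
- by [].
- move=> x xs; rewrite !boxtimes1_cons mulr_sumr; apply: eq_bigr => t _.
  by rewrite /= !fc !mul1r.
- move=> l r a x y.
  have E : forall z, 1 :: flatten [seq [:: 1; w] | w <- l ++ z :: r] =
     rcons (1 :: flatten [seq [:: 1; w] | w <- l]) 1 ++ z :: flatten [seq [:: (1:B); w] | w <- r].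
    by move=> z; rewrite map_cat flatten_cat cat_rcons.
  rewrite !boxtimes1_cons !size_cat; apply: sum_lin => t ht; rewrite !E.
  have sl := cup_slin mf (cupargs_Lin (t:=Node Leaf (Rtree t)) mg mf).
  apply: sl.
  rewrite /= Rtree_size (treesF_size ht) size_rcons /= !flat_size2.
  set s1 := size l; set s2 := size r; lia.
- by rewrite /boxtimes1 /= big_cons big_nil /= addr0 !fc !mul1r.
Qed.
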